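(* Let $X$ be a real Hilbert space, let $\alpha\in\left]0,1\right[$, $\beta>0$, $\delta\in\mathbb{R}\setminus\{0\}$, let $\{i,j\}=\{1,2\}$, and let $R_1,R_2\colon X\to X$. Suppose $\tfrac1\delta R_i$ is $\alpha$-averaged and $R_j$ is $\tfrac1\beta$-cocoercive. Set $\bar\alpha=\tfrac1{2-\alpha}$. Then $\bar\alpha\in\left]0,1\right[$ and there exists a nonexpansive $N\colon X\to X$ such that $R_2R_1=\beta\delta\big((1-\bar\alpha)\mathrm{Id}+\bar\alpha N\big)$.
   Context: For $\alpha\in\left]0,1\right[$, $T\colon X\to X$ is $\alpha$-averaged if $T=(1-\alpha)\mathrm{Id}+\alpha N$ for some nonexpansive ($1$-Lipschitz) $N\colon X\to X$. For $\beta>0$, $T$ is $\tfrac1\beta$-cocoercive if $T=\tfrac\beta2(\mathrm{Id}+N)$ for some nonexpansive $N\colon X\to X$. *)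

(* Defs.v *)
From Stdlib Require Import Reals Lra.
Open Scope R_scope.

Record PreHilbert := {
  car :> Type;
  vzero : car;
  vadd : car -> car -> car;
  vopp : car -> car;
  vscal : R -> car -> car;
  inner : car -> car -> R;
  vadd_assoc : forall x y z, vadd x (vadd y z) = vadd (vadd x y) z;
  vadd_comm : forall x y, vadd x y = vadd y x;
  vadd_0 : forall x, vadd x vzero = x;
  vadd_opp : forall x, vadd x (vopp x) = vzero;
  vscal_assoc : forall a b x, vscal a (vscal b x) = vscal (a * b) x;
  vscal_1 : forall x, vscal 1 x = x;
  vscal_distr_v : forall a x y, vscal a (vadd x y) = vadd (vscal a x) (vscal a y);
  vscal_distr_s : forall a b x, vscal (a + b) x = vadd (vscal a x) (vscal b x);
  inner_sym : forall x y, inner x y = inner y x;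
  inner_add_l : forall x y z, inner (vadd x y) z = inner x z + inner y z;
  inner_scal_l : forall a x y, inner (vscal a x) y = a * inner x y;
  inner_pos : forall x, 0 <= inner x x;
  inner_def : forall x, inner x x = 0 -> x = vzero
}.

Arguments vzero {p}.
Arguments vadd {p}.
Arguments vopp {p}.
Arguments vscal {p}.
Arguments inner {p}.

Definition vsub {X : PreHilbert} (x y : X) : X := vadd x (vopp y).
Definition vnorm {X : PreHilbert} (x : X) : R := sqrt (inner x x).

Definition complete (X : PreHilbert) : Prop :=
  forall u : nat -> X,
    (forall eps, 0 < eps -> exists N, forall m n, (N <= m)%nat -> (N <= n)%nat ->
        vnorm (vsub (u m) (u n)) < eps) ->
    exists l : X, forall eps, 0 < eps -> exists N, forall n, (N <= n)%nat ->
        vnorm (vsub (u n) l) < eps.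

Definition nonexpansive {X : PreHilbert} (N : X -> X) : Prop :=
  forall x y, vnorm (vsub (N x) (N y)) <= vnorm (vsub x y).

(* T is alpha-averaged: T = (1-alpha) Id + alpha N with N nonexpansive
   (alpha in ]0,1[ is imposed separately where used). *)
Definition averaged {X : PreHilbert} (alpha : R) (T : X -> X) : Prop :=
  exists N : X -> X, nonexpansive N /\
    forall x, T x = vadd (vscal (1 - alpha) x) (vscal alpha (N x)).

(* cocoercive beta T  means  "T is (1/beta)-cocoercive":
   T = (beta/2)(Id + N) with N nonexpansive. *)
Definition cocoercive {X : PreHilbert} (beta : R) (T : X -> X) : Prop :=
  exists N : X -> X, nonexpansive N /\
    forall x, T x = vscal (beta / 2) (vadd x (N x)).

(* Main.v *)
Require Import Defs.
From Stdlib Require Import Reals Lra.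
Open Scope R_scope.

Section Tools.
Variable X : PreHilbert.

Lemma vadd_0_l (x : X) : vadd vzero x = x.
Proof. rewrite vadd_comm; apply vadd_0. Qed.

Lemma vscal_0 (x : X) : vscal 0 x = vzero.
Proof.
  assert (H : vscal 0 x = vadd (vscal 0 x) (vscal 0 x)).
  { rewrite <- vscal_distr_s. f_equal. ring. }
  assert (H2 : vadd (vscal 0 x) (vopp (vscal 0 x)) =
               vadd (vadd (vscal 0 x) (vscal 0 x)) (vopp (vscal 0 x))).
  { rewrite <- H. reflexivity. }
  rewrite vadd_opp, <- vadd_assoc, vadd_opp, vadd_0 in H2. auto.
Qed.

Lemma vopp_scal (x : X) : vopp x = vscal (-1) x.
Proof.
  assert (H : vadd x (vscal (-1) x) = vzero).
  { rewrite <- (vscal_1 X x) at 1. rewrite <- vscal_distr_s.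
    replace (1 + -1) with 0 by ring. apply vscal_0. }
  rewrite <- (vadd_0 X (vopp x)). rewrite <- H, vadd_assoc.
  rewrite (vadd_comm X (vopp x) x), vadd_opp. apply vadd_0_l.
Qed.

Lemma inner_add_r (x y z : X) : inner x (vadd y z) = inner x y + inner x z.
Proof. rewrite inner_sym, inner_add_l, (inner_sym X y), (inner_sym X z). auto. Qed.

Lemma inner_scal_r a (x y : X) : inner x (vscal a y) = a * inner x y.
Proof. rewrite inner_sym, inner_scal_l, (inner_sym X y). auto. Qed.

End Tools.

Ltac expand :=
  unfold vsub in *; rewrite ?vopp_scal in *;
  repeat (rewrite ?inner_add_l, ?inner_add_r, ?inner_scal_l, ?inner_scal_r in *);
  repeat (rewrite ?vscal_assoc in *).

Ltac symm :=
  repeat match goal with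
  | |- context [@inner ?X ?a ?b] =>
      match goal with
      | |- context [@inner X b a] =>
        tryif constr_eq a b then fail else rewrite (inner_sym X b a)
      end
  end.

Lemma sqrt_le_inv x y : 0 <= x -> 0 <= y -> sqrt x <= sqrt y -> x <= y.
Proof.
  intros hx hy h. rewrite <- (sqrt_sqrt x hx), <- (sqrt_sqrt y hy).
  apply Rmult_le_compat; auto using sqrt_pos.
Qed.

Lemma ne_inner {X : PreHilbert} (N : X -> X) : nonexpansive N ->
  forall x y, inner (vsub (N x) (N y)) (vsub (N x) (N y)) <= inner (vsub x y) (vsub x y).
Proof. intros H x y. apply sqrt_le_inv; auto using inner_pos. apply H. Qed.

Definition avg {X : PreHilbert} (c : R) (T : X -> X) : Prop :=
  forall x y,
    inner (vsub (vsub (T x) (T y)) (vscal (1 - c) (vsub x y)))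
          (vsub (vsub (T x) (T y)) (vscal (1 - c) (vsub x y)))
    <= c ^ 2 * inner (vsub x y) (vsub x y).

Lemma averaged_avg {X : PreHilbert} a (T : X -> X) : averaged a T -> avg a T.
Proof.
  intros [N [HN HT]] x y. rewrite !HT.
  assert (h := ne_inner N HN x y).
  assert (E : forall z w : X, z = w -> inner z z = inner w w) by (intros; subst; auto).
  match goal with |- ?L <= _ => assert (Heq : L = a^2 * inner (vsub (N x) (N y)) (vsub (N x) (N y))) end.
  { expand. symm. ring. }
  rewrite Heq. apply Rmult_le_compat_l; auto. apply pow2_ge_0.
Qed.

Lemma avg_averaged {X : PreHilbert} c (T : X -> X) : 0 < c -> avg c T -> averaged c T.
Proof.
  intros hc H.
  exists (fun x => vscal (/ c) (vsub (T x) (vscal (1 - c) x))). split.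
  - intros x y. apply sqrt_le_1_alt.
    assert (h := H x y).
    match goal with |- ?L <= _ => assert (Heq : L = / c ^ 2 *
      inner (vsub (vsub (T x) (T y)) (vscal (1 - c) (vsub x y)))
          (vsub (vsub (T x) (T y)) (vscal (1 - c) (vsub x y)))) end.
    { expand. symm. field. lra. }
    rewrite Heq.
    apply Rle_trans with (/ c ^ 2 * (c ^ 2 * inner (vsub x y) (vsub x y))).
    + apply Rmult_le_compat_l; auto. apply Rlt_le, Rinv_0_lt_compat, pow_lt; lra.
    + right. field. lra.
  - intros x. rewrite vscal_assoc. replace (c * / c) with 1 by (field; lra).
    rewrite vscal_1. unfold vsub. rewrite vopp_scal, vscal_assoc.
    rewrite (vadd_comm X (T x)), vadd_assoc, <- vscal_distr_s.
    replace (1 - c + -1 * (1 - c)) with 0 by ring.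
    rewrite vscal_0, vadd_0_l. auto.
Qed.

Lemma cocoercive_avg {X : PreHilbert} b (T : X -> X) : 0 < b -> cocoercive b T ->
  avg (1/2) (fun x => vscal (/ b) (T x)).
Proof.
  intros hb [N [HN HT]] x y. rewrite !HT.
  assert (h := ne_inner N HN x y).
  match goal with |- ?L <= _ => assert (Heq : L = (1/2)^2 * inner (vsub (N x) (N y)) (vsub (N x) (N y))) end.
  { expand. symm. field. lra. }
  rewrite Heq. apply Rmult_le_compat_l; auto. apply pow2_ge_0.
Qed.

Lemma avg_scale {X : PreHilbert} c k (T : X -> X) : k <> 0 -> avg c T ->
  avg c (fun y => vscal (/ k) (T (vscal k y))).
Proof.
  intros hk H x y. assert (h := H (vscal k x) (vscal k y)).
  set (A := T (vscal k x)) in *. set (B := T (vscal k y)) in *.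
  match goal with |- ?L <= _ => assert (Heq : L = / k ^ 2 *
    inner (vsub (vsub A B) (vscal (1 - c) (vsub (vscal k x) (vscal k y))))
          (vsub (vsub A B) (vscal (1 - c) (vsub (vscal k x) (vscal k y))))) end.
  { clearbody A B. clear h. expand. symm. field. auto. }
  assert (Heq2 : inner (vsub (vscal k x) (vscal k y)) (vsub (vscal k x) (vscal k y))
     = k ^ 2 * inner (vsub x y) (vsub x y)).
  { clear h Heq. expand. symm. ring. }
  rewrite Heq. rewrite Heq2 in h.
  apply Rle_trans with (/ k ^ 2 * (c ^ 2 * (k ^ 2 * inner (vsub x y) (vsub x y)))).
  - apply Rmult_le_compat_l; auto. apply Rlt_le, Rinv_0_lt_compat.
    destruct (pow2_ge_0 k) as [|E]; auto. symmetry in E.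
    apply (pow_nonzero k 2) in hk. contradiction.
  - right. field. auto.
Qed.

Lemma avg_ext {X : PreHilbert} c (F G : X -> X) : (forall x, F x = G x) -> avg c F -> avg c G.
Proof. intros E H x y. rewrite <- !E. apply H. Qed.

Lemma keyA {X : PreHilbert} a (u s w : X) : 0 < a < 1 ->
  inner (vsub s (vscal (1 - 1/2) u)) (vsub s (vscal (1 - 1/2) u)) <= (1/2)^2 * inner u u ->
  inner (vsub w (vscal (1 - a) s)) (vsub w (vscal (1 - a) s)) <= a^2 * inner s s ->
  inner (vsub w (vscal (1 - / (2 - a)) u)) (vsub w (vscal (1 - / (2 - a)) u))
    <= (/ (2 - a))^2 * inner u u.
Proof.
  intros ha h1 h2.
  set (V := vadd (vadd (vscal a u) (vscal (-1) s)) (vscal (1 - a) w)).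
  assert (hV := inner_pos X V).
  assert (Hid : (/ (2 - a))^2 * inner u u -
     inner (vsub w (vscal (1 - / (2 - a)) u)) (vsub w (vscal (1 - / (2 - a)) u)) =
     2 / (2 - a) * ((1/2)^2 * inner u u - inner (vsub s (vscal (1 - 1/2) u)) (vsub s (vscal (1 - 1/2) u)))
     + / (a * (2 - a)) * ((a^2 * inner s s - inner (vsub w (vscal (1 - a) s)) (vsub w (vscal (1 - a) s)))
        + inner V V)).
  { clear h1 h2 hV. unfold V. expand. symm. field. lra. }
  assert (0 <= 2 / (2 - a) * ((1/2)^2 * inner u u - inner (vsub s (vscal (1 - 1/2) u)) (vsub s (vscal (1 - 1/2) u)))).
  { apply Rmult_le_pos. apply Rlt_le, Rdiv_lt_0_compat; lra. lra. }
  assert (0 <= / (a * (2 - a)) * ((a^2 * inner s s - inner (vsub w (vscal (1 - a) s)) (vsub w (vscal (1 - a) s)))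
        + inner V V)).
  { apply Rmult_le_pos. apply Rlt_le, Rinv_0_lt_compat, Rmult_lt_0_compat; lra. lra. }
  lra.
Qed.

Lemma keyB {X : PreHilbert} a (u s w : X) : 0 < a < 1 ->
  inner (vsub s (vscal (1 - a) u)) (vsub s (vscal (1 - a) u)) <= a^2 * inner u u ->
  inner (vsub w (vscal (1 - 1/2) s)) (vsub w (vscal (1 - 1/2) s)) <= (1/2)^2 * inner s s ->
  inner (vsub w (vscal (1 - / (2 - a)) u)) (vsub w (vscal (1 - / (2 - a)) u))
    <= (/ (2 - a))^2 * inner u u.
Proof.
  intros ha h1 h2.
  set (V := vadd (vadd (vscal (1 - a) u) (vscal (-1) s)) (vscal a w)).
  assert (hV := inner_pos X V).
  assert (Hid : (/ (2 - a))^2 * inner u u -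
     inner (vsub w (vscal (1 - / (2 - a)) u)) (vsub w (vscal (1 - / (2 - a)) u)) =
     / (a * (2 - a)) * ((a^2 * inner u u - inner (vsub s (vscal (1 - a) u)) (vsub s (vscal (1 - a) u)))
        + inner V V)
     + 2 / (2 - a) * ((1/2)^2 * inner s s - inner (vsub w (vscal (1 - 1/2) s)) (vsub w (vscal (1 - 1/2) s)))).
  { clear h1 h2 hV. unfold V. expand. symm. field. lra. }
  assert (0 <= 2 / (2 - a) * ((1/2)^2 * inner s s - inner (vsub w (vscal (1 - 1/2) s)) (vsub w (vscal (1 - 1/2) s)))).
  { apply Rmult_le_pos. apply Rlt_le, Rdiv_lt_0_compat; lra. lra. }
  assert (0 <= / (a * (2 - a)) * ((a^2 * inner u u - inner (vsub s (vscal (1 - a) u)) (vsub s (vscal (1 - a) u)))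
        + inner V V)).
  { apply Rmult_le_pos. apply Rlt_le, Rinv_0_lt_compat, Rmult_lt_0_compat; lra. lra. }
  lra.
Qed.

Lemma compA {X : PreHilbert} a (S T : X -> X) : 0 < a < 1 -> avg (1/2) S -> avg a T ->
  avg (/ (2 - a)) (fun x => T (S x)).
Proof.
  intros ha hS hT x y. apply keyA with (s := vsub (S x) (S y)); [auto | apply hS | apply (hT (S x) (S y))].
Qed.

Lemma compB {X : PreHilbert} a (S T : X -> X) : 0 < a < 1 -> avg a S -> avg (1/2) T ->
  avg (/ (2 - a)) (fun x => T (S x)).
Proof.
  intros ha hS hT x y. apply keyB with (s := vsub (S x) (S y)); [auto | apply hS | apply (hT (S x) (S y))].
Qed.

Theorem mainTheorem8 (X : PreHilbert) (HX : complete X)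
  (alpha beta delta : R) (R1 R2 : X -> X)
  (Halpha : 0 < alpha < 1) (Hbeta : 0 < beta) (Hdelta : delta <> 0)
  (Hcase :
     (averaged alpha (fun x => vscal (/ delta) (R1 x)) /\ cocoercive beta R2) \/
     (averaged alpha (fun x => vscal (/ delta) (R2 x)) /\ cocoercive beta R1)) :
  let alphabar := / (2 - alpha) in
  0 < alphabar < 1 /\
  exists N : X -> X, nonexpansive N /\
    forall x, R2 (R1 x) =
      vscal (beta * delta) (vadd (vscal (1 - alphabar) x) (vscal alphabar (N x))).
Proof.
  intros alphabar. unfold alphabar.
  split.
  { split. apply Rinv_0_lt_compat; lra.
    rewrite <- Rinv_1. apply Rinv_lt_contravar; lra. }
  assert (Hbd : beta * delta <> 0) by (apply Rmult_integral_contrapositive; split; lra).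
  assert (HF : avg (/ (2 - alpha)) (fun x => vscal (/ (beta * delta)) (R2 (R1 x)))).
  { destruct Hcase as [[h1 h2] | [h1 h2]].
    - apply avg_ext with (F := fun x =>
         (fun y => vscal (/ delta) ((fun z => vscal (/ beta) (R2 z)) (vscal delta y)))
         ((fun x => vscal (/ delta) (R1 x)) x)).
      + intros x. cbv beta. rewrite !vscal_assoc.
        replace (delta * / delta) with 1 by (field; auto). rewrite vscal_1.
        f_equal. field. split; lra.
      + apply (compB alpha (fun x => vscal (/ delta) (R1 x)) (fun y => vscal (/ delta) ((fun z => vscal (/ beta) (R2 z)) (vscal delta y)))); [auto | apply averaged_avg; exact h1 | ].
        apply (avg_scale (1/2) delta (fun z => vscal (/ beta) (R2 z))); [exact Hdelta |]. apply cocoercive_avg; auto.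
    - apply avg_ext with (F := fun x =>
         (fun y => vscal (/ beta) ((fun z => vscal (/ delta) (R2 z)) (vscal beta y)))
         ((fun x => vscal (/ beta) (R1 x)) x)).
      + intros x. cbv beta. rewrite !vscal_assoc.
        replace (beta * / beta) with 1 by (field; lra). rewrite vscal_1.
        f_equal. field. split; lra.
      + apply (compA alpha (fun x => vscal (/ beta) (R1 x)) (fun y => vscal (/ beta) ((fun z => vscal (/ delta) (R2 z)) (vscal beta y)))); [auto | apply cocoercive_avg; auto | ].
        apply (avg_scale alpha beta (fun z => vscal (/ delta) (R2 z))); [lra|]. apply averaged_avg; exact h1. }
  apply avg_averaged in HF; [| apply Rinv_0_lt_compat; lra].
  destruct HF as [N [HN HE]]. exists N. split; auto.
  intros x. rewrite <- HE, vscal_assoc.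
  replace (beta * delta * / (beta * delta)) with 1 by (field; split; lra).
  rewrite vscal_1. auto.
Qed.
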